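(* Let $0<q<1$, $N\in\{\tfrac12,1,\tfrac32,2,\dots\}$, $n\in\{0,1,\dots,\lfloor N+\tfrac12\rfloor\}$, and $\alpha\in\mathbb{C}$ with $\pm q\alpha, q^2\alpha^2\notin\{q^{-j}:j\in\mathbb{Z}_{\ge0}\}$. Then for all $x\in\mathbb{C}$: $${}_4\phi_3\!\left(\begin{matrix}q^{-2n},\alpha^2q^{2n+1},q^{-x-N-\frac12},-q^{x-N-\frac12}\\ q\alpha,-q\alpha,q^{-2N-1}\end{matrix};q,q\right)={}_4\phi_3\!\left(\begin{matrix}q^{-2n},\alpha^2q^{2n+1},q^{-2x-2N-1},q^{2x-2N-1}\\ q^2\alpha^2,q^{-2N-1},q^{-2N}\end{matrix};q^2,q^2\right).$$ (Equivalently, in terms of $q$-Racah polynomials, $R_{2n}(q^{-x-N-\frac12}-q^{x-N-\frac12};\alpha,\alpha,q^{-2N-2},-1\,|\,q)=R_n(q^{-2x-2N-1}+q^{2x-2N-1};\alpha^2,q^{-1},q^{-2N-2},q^{-2N-2}\,|\,q^2)$.)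
   Context: $(x;q)_k=\prod_{j=0}^{k-1}(1-xq^j)$. ${}_4\phi_3\!\left(\begin{matrix}a_1,a_2,a_3,a_4\\ b_1,b_2,b_3\end{matrix};q,z\right)=\sum_{k\ge0}\frac{(a_1,a_2,a_3,a_4;q)_k}{(b_1,b_2,b_3,q;q)_k}z^k$; here the series terminate because of the numerator parameter $q^{-2n}$ (resp. $(q^2)^{-n}$ in base $q^2$). $q$-Racah polynomials: $R_n(q^{-y}+\gamma\delta q^{y+1};\alpha,\beta,\gamma,\delta\,|\,q)={}_4\phi_3(q^{-n},\alpha\beta q^{n+1},q^{-y},\gamma\delta q^{y+1};\alpha q,\beta\delta q,\gamma q;q,q)$. *)

(* Defs.v *)
From HB Require Import structures.
From mathcomp Require Import all_boot all_order all_algebra.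
Set Implicit Arguments. Unset Strict Implicit. Unset Printing Implicit Defensive.
Import Order.TTheory GRing.Theory Num.Theory.
Local Open Scope ring_scope.

Definition qpoch (R : ringType) (x q : R) (k : nat) : R :=
  \prod_(j < k) (1 - x * q ^+ j).

(* It is used only with a
   numerator parameter a1 = base^(-K), for which all terms with k > K vanish,
   so this is exactly the (terminating) basic hypergeometric series. *)
Definition phi43 (R : fieldType) (K : nat) (a1 a2 a3 a4 b1 b2 b3 base z : R) : R :=
  \sum_(k < K.+1)
    (qpoch a1 base k * qpoch a2 base k * qpoch a3 base k * qpoch a4 base k)
    / (qpoch b1 base k * qpoch b2 base k * qpoch b3 base k * qpoch base base k)
    * z ^+ k.

(* Main.v *)
Require Import Defs.
From HB Require Import structures.
From mathcomp Require Import all_boot all_order all_algebra.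
From mathcomp Require Import ring.
Import Order.TTheory GRing.Theory Num.Theory.
Set Implicit Arguments. Unset Strict Implicit. Unset Printing Implicit Defensive.
Local Open Scope ring_scope.


Lemma qpS (R : fieldType) (x p : R) k : qpoch x p k.+1 = qpoch x p k * (1 - x * p ^+ k).
Proof. by rewrite /qpoch big_ord_recr. Qed.

Lemma qpSl (R : fieldType) (x p : R) k : qpoch x p k.+1 = (1 - x) * qpoch (x * p) p k.
Proof.
rewrite /qpoch big_ord_recl /= expr0 mulr1; congr (_ * _).
by apply: eq_bigr => i _; rewrite /bump /= add1n exprS mulrA.
Qed.

Lemma qp0 (R : fieldType) (x p : R) : qpoch x p 0 = 1.
Proof. by rewrite /qpoch big_ord0. Qed.

Lemma E1 (R : fieldType) (x p : R) J :
  qpoch x p J.+2 = (1 - x) * qpoch (x * p) p J * (1 - x * p * p ^+ J).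
Proof. by rewrite qpSl qpS mulrA. Qed.
Lemma E2 (R : fieldType) (x p : R) J :
  qpoch (x * p) p J.+2 = qpoch (x * p) p J * (1 - x * p * p ^+ J) * (1 - x * p * (p ^+ J * p)).
Proof. by rewrite qpS qpS exprSr. Qed.
Lemma E3 (R : fieldType) (x p : R) J : p != 0 ->
  qpoch (x / p) p J.+2 = (1 - x / p) * ((1 - x) * qpoch (x * p) p J).
Proof. by move=> hp; rewrite qpSl divfK // qpSl. Qed.
Lemma E4 (R : fieldType) (x p : R) J :
  qpoch x p J.+1 = (1 - x) * qpoch (x * p) p J.
Proof. by rewrite qpSl. Qed.

Definition phiB (R : fieldType) (q s : R) (j : nat) (z : R) :=
  qpoch (z^-1 * s) q j * qpoch (- (z * s)) q j.
Definition psiB (R : fieldType) (q s : R) (k : nat) (z : R) :=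
  qpoch (z ^- 2 * s ^+ 2) (q ^+ 2) k * qpoch (z ^+ 2 * s ^+ 2) (q ^+ 2) k.
Definition P1 (R : fieldType) (q s a z : R) :=
  (z ^+ 2 - s ^+ 2) * (s ^+ 2 * z ^+ 2 - q ^+ 2 * a ^+ 2) / (s ^+ 2 * (z ^+ 2 + 1) * (z ^+ 2 + q)).
Definition P2 (R : fieldType) (q s a z : R) :=
  (1 - s ^+ 2 * z ^+ 2) * (s ^+ 2 - q ^+ 2 * a ^+ 2 * z ^+ 2) / (s ^+ 2 * (1 + z ^+ 2) * (1 + q * z ^+ 2)).
Definition Lop (R : fieldType) (q s a : R) (F : R -> R) (z : R) :=
  P1 q s a z * (F (z / q) - F z) + P2 q s a z * (F (q * z) - F z).
Definition lam (R : fieldType) (q a : R) (j : nat) :=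
  ((q ^+ j)^-1 - 1) * (1 - a ^+ 2 * q * q ^+ j).
Definition mu (R : fieldType) (q s a : R) (j : nat) :=
  - (q ^+ j)^-1 * (1 - q ^+ j) * (1 - a * q ^+ j) * (1 + a * q ^+ j) * (1 - s ^+ 2 * q ^+ j / q).
Definition lamG (R : fieldType) (q a : R) (k : nat) :=
  (((q ^+ 2) ^+ k)^-1 - 1) * (1 - a ^+ 2 * q * (q ^+ 2) ^+ k).
Definition muG (R : fieldType) (q s a : R) (k : nat) :=
  - ((q ^+ 2) ^+ k)^-1 * (1 - (q ^+ 2) ^+ k) * (1 - a ^+ 2 * (q ^+ 2) ^+ k)
    * (1 - s ^+ 2 * (q ^+ 2) ^+ k / q ^+ 2) * (1 - s ^+ 2 * (q ^+ 2) ^+ k / q).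

Lemma Lphi (R : fieldType) (q s a z : R) j :
  q != 0 -> s != 0 -> z != 0 -> z ^+ 2 + 1 != 0 -> z ^+ 2 + q != 0 -> 1 + q * z ^+ 2 != 0 ->
  Lop q s a (phiB q s j) z = lam q a j * phiB q s j z + mu q s a j * phiB q s j.-1 z.
Proof.
move=> hq hs hz h1 h2 h3.
have h1' : 1 + z ^+ 2 != 0 by rewrite addrC.
rewrite /Lop /P1 /P2 /lam /mu /phiB.
case: j => [|[|J]].
- by rewrite !qp0 !expr0 !subrr invr1; ring.
- rewrite !qpS !qp0 !expr0 /=. field; by rewrite ?hq ?hz ?h1 ?h1' ?h2 ?h3 ?hs.
have Hx1 : (z / q)^-1 * s = (z^-1 * s) * q by field; rewrite ?hq ?hz.
have Hy1 : - ((z / q) * s) = (- (z * s)) / q by field; rewrite ?hq ?hz.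
have Hx2 : (q * z)^-1 * s = (z^-1 * s) / q by field; rewrite ?hq ?hz.
have Hy2 : - ((q * z) * s) = (- (z * s)) * q by field; rewrite ?hq ?hz.
rewrite Hx1 Hy1 Hx2 Hy2 /=.
rewrite (E2 (z^-1 * s)) (E3 (z^-1 * s)) // (E1 (z^-1 * s)) (E4 (z^-1 * s)).
rewrite (E2 (- (z * s))) (E3 (- (z * s))) // (E1 (- (z * s))) (E4 (- (z * s))).
set U := qpoch _ q J. set V := qpoch _ q J.
rewrite !exprS.
set Q := q ^+ J.
have hQ : Q != 0 by rewrite expf_neq0.
field.
by rewrite ?hq ?hz ?h1 ?h1' ?h2 ?h3 ?hs ?hQ.
Qed.

Lemma Lpsi (R : fieldType) (q s a z : R) j :
  q != 0 -> s != 0 -> z != 0 -> z ^+ 2 + 1 != 0 -> z ^+ 2 + q != 0 -> 1 + q * z ^+ 2 != 0 ->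
  Lop q s a (psiB q s j) z = lamG q a j * psiB q s j z + muG q s a j * psiB q s j.-1 z.
Proof.
move=> hq hs hz h1 h2 h3.
have h1' : 1 + z ^+ 2 != 0 by rewrite addrC.
have hq2 : q ^+ 2 != 0 by rewrite expf_neq0.
rewrite /Lop /P1 /P2 /lamG /muG /psiB.
case: j => [|[|J]].
- by rewrite !qp0 !expr0 !subrr invr1; ring.
- rewrite !qpS !qp0 !expr0 /=. field; by rewrite ?hq ?hz ?h1 ?h1' ?h2 ?h3 ?hs.
have Hx1 : (z / q) ^- 2 * s ^+ 2 = (z ^- 2 * s ^+ 2) * q ^+ 2 by field; rewrite ?hq ?hz.
have Hy1 : (z / q) ^+ 2 * s ^+ 2 = (z ^+ 2 * s ^+ 2) / q ^+ 2 by field; rewrite ?hq ?hz.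
have Hx2 : (q * z) ^- 2 * s ^+ 2 = (z ^- 2 * s ^+ 2) / q ^+ 2 by field; rewrite ?hq ?hz.
have Hy2 : (q * z) ^+ 2 * s ^+ 2 = (z ^+ 2 * s ^+ 2) * q ^+ 2 by field; rewrite ?hq ?hz.
rewrite Hx1 Hy1 Hx2 Hy2 /=.
rewrite (E2 (z ^- 2 * s ^+ 2)) (E3 (z ^- 2 * s ^+ 2)) // (E1 (z ^- 2 * s ^+ 2)) (E4 (z ^- 2 * s ^+ 2)).
rewrite (E2 (z ^+ 2 * s ^+ 2)) (E3 (z ^+ 2 * s ^+ 2)) // (E1 (z ^+ 2 * s ^+ 2)) (E4 (z ^+ 2 * s ^+ 2)).
set U := qpoch _ (q ^+ 2) J. set V := qpoch _ (q ^+ 2) J.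
rewrite !exprS.
set Q := (q * (q * 1)) ^+ J.
have hQ : Q != 0 by rewrite expf_neq0 // mulr1 mulf_neq0.
field.
by rewrite ?hq ?hz ?h1 ?h1' ?h2 ?h3 ?hs ?hQ.
Qed.


Lemma Lop_sum (R : fieldType) (q s a : R) (D : nat) (c : nat -> R) (b : nat -> R -> R) z :
  Lop q s a (fun x => \sum_(j < D.+1) c j * b j x) z = \sum_(j < D.+1) c j * Lop q s a (b j) z.
Proof.
rewrite /Lop -!sumrB !mulr_sumr -big_split /=.
by apply: eq_bigr => i _; ring.
Qed.

Lemma shift_id (R : fieldType) (D : nat) (c lamf muf b : nat -> R) :
  muf 0%N = 0 ->
  \sum_(j < D.+1) c j * (lamf j * b j + muf j * b j.-1) - lamf D * \sum_(j < D.+1) c j * b j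
  = \sum_(j < D) (c j * (lamf j - lamf D) + c j.+1 * muf j.+1) * b j.
Proof.
move=> h0.
have -> : \sum_(j < D.+1) c j * (lamf j * b j + muf j * b j.-1) =
  \sum_(j < D.+1) c j * lamf j * b j + \sum_(j < D.+1) c j * muf j * b j.-1.
  by rewrite -big_split /=; apply: eq_bigr => i _; ring.
rewrite [X in _ + X - _]big_ord_recl /= h0 mulr0 mul0r add0r.
rewrite [X in X + _ - _]big_ord_recr /= [X in _ - _ * X]big_ord_recr /=.
rewrite mulrDr mulr_sumr.
have -> : \sum_(j < D) (c j * (lamf j - lamf D) + c j.+1 * muf j.+1) * b j =
   \sum_(j < D) c j * lamf j * b j + \sum_(j < D) c j.+1 * muf j.+1 * b j
   - \sum_(j < D) lamf D * (c j * b j).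
  rewrite -big_split -sumrB /=; apply: eq_bigr => i _; ring.
have E : forall i : 'I_D, c (bump 0 i) * muf (bump 0 i) * b (bump 0 i).-1 = c i.+1 * muf i.+1 * b i.
  by move=> i; rewrite /bump /= add1n.
rewrite (eq_bigr _ (fun i _ => E i)).
ring.
Qed.

Lemma eigen_sum (R : fieldType) (q s a : R) (D : nat) (c lamf muf : nat -> R) (b : nat -> R -> R) z :
  muf 0%N = 0 ->
  (forall j, (j <= D)%N -> Lop q s a (b j) z = lamf j * b j z + muf j * b j.-1 z) ->
  (forall j, (j < D)%N -> c j.+1 * muf j.+1 = (lamf D - lamf j) * c j) ->
  Lop q s a (fun x => \sum_(j < D.+1) c j * b j x) z = lamf D * \sum_(j < D.+1) c j * b j z.
Proof.
move=> h0 hL hr; rewrite Lop_sum.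
rewrite (eq_bigr (fun j : 'I_D.+1 => c j * (lamf j * b j z + muf j * b j.-1 z))); last first.
  by move=> i _; rewrite hL // -ltnS.
apply/eqP; rewrite -subr_eq0; apply/eqP.
rewrite (@shift_id _ D c lamf muf (fun j => b j z)) //.
apply: big1 => i _; rewrite hr //; ring.
Qed.


Definition inSpan (R : fieldType) (q s : R) (D : nat) (F : R -> R) :=
  exists c : nat -> R, forall x, x != 0 -> F x = \sum_(j < D.+1) c j * phiB q s j x.

Definition fac (R : fieldType) (q s : R) (i : nat) (x : R) :=
  (1 + x^-1 * s * q ^+ i) * (1 - x * s * q ^+ i).

Lemma span_ext (R : fieldType) (q s : R) D (F G : R -> R) :
  (forall x, x != 0 -> F x = G x) -> inSpan q s D F -> inSpan q s D G.
Proof. by move=> e [c hc]; exists c => x hx; rewrite -e // hc. Qed.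

Lemma span_add (R : fieldType) (q s : R) D (F G : R -> R) :
  inSpan q s D F -> inSpan q s D G -> inSpan q s D (fun x => F x + G x).
Proof.
move=> [c hc] [d hd]; exists (fun j => c j + d j) => x hx.
by rewrite hc // hd // -big_split /=; apply: eq_bigr => i _; rewrite mulrDl.
Qed.

Lemma span_scale (R : fieldType) (q s : R) D (F : R -> R) k :
  inSpan q s D F -> inSpan q s D (fun x => k * F x).
Proof.
move=> [c hc]; exists (fun j => k * c j) => x hx.
by rewrite hc // mulr_sumr; apply: eq_bigr => i _; rewrite mulrA.
Qed.

Lemma span_widen (R : fieldType) (q s : R) D D' (F : R -> R) :
  (D <= D')%N -> inSpan q s D F -> inSpan q s D' F.
Proof.
move=> le [c hc]; exists (fun j => if (j < D.+1)%N then c j else 0) => x hx.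
rewrite hc // (big_ord_widen D'.+1 (fun j => c j * phiB q s j x)) ?ltnS //.
rewrite big_mkcond /=; apply: eq_bigr => i _.
by case: ifP => _ //; rewrite mul0r.
Qed.

Lemma span_phi (R : fieldType) (q s : R) k : inSpan q s k (phiB q s k).
Proof.
exists (fun j => (j == k)%:R) => x hx.
rewrite big_ord_recr /= big1 => [|i _]; last by rewrite (ltn_eqF (ltn_ord i)) mul0r.
rewrite eqxx /=; ring.
Qed.

Lemma span_sum (R : fieldType) (q s : R) D K (B : nat -> R) (G : nat -> R -> R) :
  (forall k, (k <= K)%N -> inSpan q s D (G k)) ->
  inSpan q s D (fun x => \sum_(k < K.+1) B k * G k x).
Proof.
elim: K => [|K IH] h.
  apply: (@span_ext _ _ _ _ (fun x => B 0%N * G 0%N x)).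
    by move=> x _; rewrite big_ord1.
  exact: span_scale (h 0%N (leqnn 0)).
apply: (@span_ext _ _ _ _ (fun x => \sum_(k < K.+1) B k * G k x + B K.+1 * G K.+1 x)).
  by move=> x _; rewrite [RHS]big_ord_recr.
apply: span_add; first by apply: IH => k hk; apply: h; rewrite (leq_trans hk).
exact: span_scale (h _ (leqnn _)).
Qed.

Lemma phi_fac (R : fieldType) (q s : R) i j x : q != 0 -> x != 0 ->
  phiB q s j x * fac q s i x =
  (1 - s ^+ 2 * q ^+ i * q ^+ i + q ^+ i / q ^+ j * (1 - s ^+ 2 * q ^+ j * q ^+ j)) * phiB q s j x
  + (- (q ^+ i / q ^+ j)) * phiB q s j.+1 x.
Proof.
move=> hq hx; rewrite /phiB /fac !qpS.
have hj : q ^+ j != 0 by rewrite expf_neq0.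
by field; rewrite ?hj ?hx.
Qed.

Lemma span_mulfac (R : fieldType) (q s : R) D i (F : R -> R) : q != 0 ->
  inSpan q s D F -> inSpan q s D.+1 (fun x => F x * fac q s i x).
Proof.
move=> hq [c hc].
pose be j := 1 - s ^+ 2 * q ^+ i * q ^+ i + q ^+ i / q ^+ j * (1 - s ^+ 2 * q ^+ j * q ^+ j).
pose ga j := - (q ^+ i / q ^+ j).
exists (fun j => (if (j < D.+1)%N then c j * be j else 0) +
                 (if j is j'.+1 then c j' * ga j' else 0)) => x hx.
rewrite hc // mulr_suml.
rewrite (eq_bigr (fun j : 'I_D.+1 => c j * be j * phiB q s j x + c j * ga j * phiB q s j.+1 x)); last first.
  by move=> j _; rewrite -mulrA phi_fac // /be /ga; ring.
rewrite big_split /=.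
rewrite (eq_bigr (fun j : 'I_D.+2 => (if (j < D.+1)%N then c j * be j else 0) * phiB q s j x
        + (if nat_of_ord j is j'.+1 then c j' * ga j' else 0) * phiB q s j x)); last first.
  by move=> j _; rewrite mulrDl.
rewrite big_split /=; congr (_ + _).
  rewrite [RHS]big_ord_recr /= ltnn mul0r addr0.
  by apply: eq_bigr => j _; rewrite ltn_ord.
by rewrite [RHS]big_ord_recl /= mul0r add0r.
Qed.

Lemma psi_factor (R : fieldType) (q s : R) k x : x != 0 ->
  psiB q s k x = phiB q s k x * \prod_(i < k) fac q s i x.
Proof.
move=> hx; elim: k => [|k IH].
  by rewrite /psiB /phiB !qp0 big_ord0 !mulr1.
rewrite big_ord_recr /=.
transitivity (psiB q s k x * ((1 - x ^- 2 * s ^+ 2 * (q ^+ 2) ^+ k) * (1 - x ^+ 2 * s ^+ 2 * (q ^+ 2) ^+ k))).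
  by rewrite /psiB !qpS; ring.
rewrite IH /phiB /fac !qpS exprAC.
by field; rewrite ?hx.
Qed.

Lemma psi_span (R : fieldType) (q s : R) k : q != 0 -> inSpan q s (k + k) (psiB q s k).
Proof.
move=> hq.
have H : forall m, inSpan q s (k + m) (fun x => phiB q s k x * \prod_(i < m) fac q s i x).
  elim => [|m IH].
    apply: (@span_ext _ _ _ _ (phiB q s k)); last by rewrite addn0; exact: span_phi.
    by move=> x _; rewrite big_ord0 mulr1.
  rewrite addnS.
  apply: (@span_ext _ _ _ _ (fun x => (phiB q s k x * \prod_(i < m) fac q s i x) * fac q s m x)).
    by move=> x _; rewrite big_ord_recr /= [RHS]mulrA.
  exact: span_mulfac.
apply: span_ext (H k) => x hx; by rewrite psi_factor.
Qed.


Lemma qpoch_neq0 (R : fieldType) (x p : R) j :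
  (forall i, (i < j)%N -> 1 - x * p ^+ i != 0) -> qpoch x p j != 0.
Proof. by move=> h; apply/prodf_neq0 => i _; apply: h. Qed.

Lemma qpoch_eq0 (R : fieldType) (x p : R) i j :
  (i < j)%N -> x * p ^+ i = 1 -> qpoch x p j = 0.
Proof.
move=> hij e; rewrite /qpoch (bigD1 (Ordinal hij)) //= e subrr mul0r //.
Qed.

Lemma pow_neq (R : numFieldType) (q : R) i k : 0 < q -> q < 1 -> (i < k)%N -> q ^+ i != q ^+ k.
Proof.
move=> h0 h1 hik; apply/negP => /eqP E.
have hi : q ^+ i != 0 by rewrite expf_neq0 // gt_eqF.
have : q ^+ (k - i) = 1.
  apply: (mulfI hi); rewrite mulr1 -exprD subnKC ?(ltnW hik) //.
by apply/eqP; rewrite lt_eqF // exprn_ilt1 ?ltW // subn_eq0 -ltnNge.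
Qed.

Lemma phi_lat0 (R : fieldType) (q s : R) j m : q != 0 -> s != 0 -> (m < j)%N ->
  phiB q s j (s * q ^+ m) = 0.
Proof.
move=> hq hs hmj; rewrite /phiB [X in X * _](qpoch_eq0 (i := m)) ?mul0r //.
have hm : q ^+ m != 0 by rewrite expf_neq0.
by field; rewrite ?hs ?hm ?hq.
Qed.

Lemma phi_latnz (R : numFieldType) (q s : R) j m : 0 < q -> q < 1 -> 0 < s -> (j <= m)%N ->
  phiB q s j (s * q ^+ m) != 0.
Proof.
move=> h0 h1 hs hjm.
have hq : q != 0 by rewrite gt_eqF.
have hm : q ^+ m != 0 by rewrite expf_neq0.
have hs' : s != 0 by rewrite gt_eqF.
rewrite /phiB mulf_neq0 //; apply: qpoch_neq0 => i hi.
  have -> : 1 - (s * q ^+ m)^-1 * s * q ^+ i = (q ^+ m - q ^+ i) / q ^+ m.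
    by field; rewrite ?hm ?hs' ?hq.
  rewrite mulf_neq0 ?invr_eq0 // subr_eq0 eq_sym pow_neq //.
  exact: leq_trans hi hjm.
have -> : 1 - - (s * q ^+ m * s) * q ^+ i = 1 + s * s * q ^+ m * q ^+ i by ring.
rewrite gt_eqF // ltr_wpDr // ?mulr_ge0 ?ltW ?exprn_gt0 //.
Qed.

Lemma indep (R : numFieldType) (q s : R) D (e : nat -> R) : 0 < q -> q < 1 -> 0 < s ->
  (forall m, (m < D)%N -> \sum_(j < D) e j * phiB q s j (s * q ^+ m) = 0) ->
  forall j, (j < D)%N -> e j = 0.
Proof.
move=> h0 h1 hs H.
have hq : q != 0 by rewrite gt_eqF.
have hs' : s != 0 by rewrite gt_eqF.
elim/ltn_ind => m IH hm.
have := H m hm; rewrite (bigD1 (Ordinal hm)) //= big1 ?addr0.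
  by move/eqP; rewrite mulf_eq0 (negbTE (phi_latnz h0 h1 hs (leqnn m))) orbF => /eqP.
move=> i hi.
case: (ltngtP i m) => [lt|gt|eq].
- by rewrite IH // mul0r.
- by rewrite phi_lat0 // mulr0.
- have ei : i = Ordinal hm by apply: val_inj; rewrite /= eq.
  by rewrite ei eqxx in hi.
Qed.


Definition Acoef (R : fieldType) (q s a : R) (D j : nat) :=
  qpoch (q ^+ D)^-1 q j * qpoch (a ^+ 2 * q * q ^+ D) q j /
  (qpoch (q * a) q j * qpoch (- (q * a)) q j * qpoch (s ^+ 2) q j * qpoch q q j) * q ^+ j.

Definition Bcoef (R : fieldType) (q s a : R) (n k : nat) :=
  qpoch ((q ^+ 2) ^+ n)^-1 (q ^+ 2) k * qpoch (a ^+ 2 * q * (q ^+ 2) ^+ n) (q ^+ 2) k /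
  (qpoch (q ^+ 2 * a ^+ 2) (q ^+ 2) k * qpoch (s ^+ 2) (q ^+ 2) k * qpoch (s ^+ 2 * q) (q ^+ 2) k
   * qpoch (q ^+ 2) (q ^+ 2) k) * (q ^+ 2) ^+ k.

Lemma ratioA (R : fieldType) (q s a : R) D j :
  q != 0 ->
  (forall i, (i <= j)%N -> 1 - q * a * q ^+ i != 0) ->
  (forall i, (i <= j)%N -> 1 - - (q * a) * q ^+ i != 0) ->
  (forall i, (i <= j)%N -> 1 - s ^+ 2 * q ^+ i != 0) ->
  (forall i, (i <= j)%N -> 1 - q * q ^+ i != 0) ->
  Acoef q s a D j.+1 * mu q s a j.+1 = (lam q a D - lam q a j) * Acoef q s a D j.
Proof.
move=> hq c1 c2 c3 c4.
have lt : forall i, (i < j)%N -> (i <= j)%N by move=> i /ltnW.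
have d1 := qpoch_neq0 (fun i h => c1 i (lt i h)).
have d2 := qpoch_neq0 (fun i h => c2 i (lt i h)).
have d3 := qpoch_neq0 (fun i h => c3 i (lt i h)).
have d4 := qpoch_neq0 (fun i h => c4 i (lt i h)).
have e1 := c1 j (leqnn j). have e2 := c2 j (leqnn j).
have e3 := c3 j (leqnn j). have e4 := c4 j (leqnn j).
have hj : q ^+ j != 0 by rewrite expf_neq0.
have hD : q ^+ D != 0 by rewrite expf_neq0.
rewrite /Acoef /mu /lam !qpS [q ^+ j.+1]exprS.
move: d1 d2 d3 d4 e1 e2 e3 e4.
set Q := q ^+ j. set N := q ^+ D.
move=> d1 d2 d3 d4 e1 e2 e3 e4.
field.
by rewrite ?hq ?hj ?hD ?d1 ?d2 ?d3 ?d4 ?e1 ?e2 ?e3 ?e4.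
Qed.

Lemma ratioB (R : fieldType) (q s a : R) n k :
  q != 0 ->
  (forall i, (i <= k)%N -> 1 - q ^+ 2 * a ^+ 2 * (q ^+ 2) ^+ i != 0) ->
  (forall i, (i <= k)%N -> 1 - s ^+ 2 * (q ^+ 2) ^+ i != 0) ->
  (forall i, (i <= k)%N -> 1 - s ^+ 2 * q * (q ^+ 2) ^+ i != 0) ->
  (forall i, (i <= k)%N -> 1 - q ^+ 2 * (q ^+ 2) ^+ i != 0) ->
  Bcoef q s a n k.+1 * muG q s a k.+1 = (lamG q a n - lamG q a k) * Bcoef q s a n k.
Proof.
move=> hq c1 c2 c3 c4.
have lt : forall i, (i < k)%N -> (i <= k)%N by move=> i /ltnW.
have d1 := qpoch_neq0 (fun i h => c1 i (lt i h)).
have d2 := qpoch_neq0 (fun i h => c2 i (lt i h)).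
have d3 := qpoch_neq0 (fun i h => c3 i (lt i h)).
have d4 := qpoch_neq0 (fun i h => c4 i (lt i h)).
have e1 := c1 k (leqnn k). have e2 := c2 k (leqnn k).
have e3 := c3 k (leqnn k). have e4 := c4 k (leqnn k).
have hq2 : q ^+ 2 != 0 by rewrite expf_neq0.
have hk : (q ^+ 2) ^+ k != 0 by rewrite expf_neq0.
have hn : (q ^+ 2) ^+ n != 0 by rewrite expf_neq0.
rewrite /Bcoef /muG /lamG !qpS [(q ^+ 2) ^+ k.+1]exprS.
move: d1 d2 d3 d4 e1 e2 e3 e4 hq2 hk hn.
set Q := (q ^+ 2) ^+ k. set N := (q ^+ 2) ^+ n.
move=> d1 d2 d3 d4 e1 e2 e3 e4 hq2 hk hn.
field.
by rewrite exprMn ?hq ?hq2 ?hk ?hn ?d1 ?d2 ?d3 ?d4 ?e1 ?e2 ?e3 ?e4.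
Qed.


Lemma nz_from (R : fieldType) (x p : R) i : p != 0 -> x != p ^- i -> 1 - x * p ^+ i != 0.
Proof.
move=> hp h; apply/negP => /eqP E; move/negP: h; apply; apply/eqP.
have hi : p ^+ i != 0 by rewrite expf_neq0.
move/eqP: E; rewrite subr_eq0 => /eqP E.
by rewrite -[x]mulr1 -(mulfV hi) mulrA -E mul1r.
Qed.

Lemma nz_pow (R : numFieldType) (q : R) k : 0 < q -> q < 1 -> (0 < k)%N -> 1 - q ^+ k != 0.
Proof. by move=> h0 h1 hk; rewrite subr_eq0 -(expr0 q) pow_neq. Qed.

Lemma nz_sM (R : numFieldType) (q : R) M k : 0 < q -> q < 1 -> (k < M)%N -> 1 - q ^- M * q ^+ k != 0.
Proof.
move=> h0 h1 hk.
have hM : q ^+ M != 0 by rewrite expf_neq0 // gt_eqF.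
have -> : 1 - q ^- M * q ^+ k = (q ^+ M - q ^+ k) / q ^+ M by field.
by rewrite mulf_neq0 ?invr_eq0 // subr_eq0 eq_sym pow_neq.
Qed.

Lemma lat_conds (R : numFieldType) (q x : R) : 0 < q -> 0 < x ->
  [/\ x != 0, x ^+ 2 + 1 != 0, x ^+ 2 + q != 0 & 1 + q * x ^+ 2 != 0].
Proof.
move=> h0 hx; split; rewrite gt_eqF //.
- by rewrite addr_gt0 ?exprn_gt0.
- by rewrite addr_gt0 ?exprn_gt0.
- by rewrite addr_gt0 ?mulr_gt0 ?exprn_gt0.
Qed.

Lemma sum_at0 (R : fieldType) (q s : R) D (e : nat -> R) : q != 0 -> s != 0 ->
  \sum_(j < D.+1) e j * phiB q s j (s * q ^+ 0) = e 0%N.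
Proof.
move=> hq hs; rewrite big_ord_recl big1 ?addr0.
  by rewrite /phiB !qp0 !mulr1.
by move=> i _; rewrite phi_lat0 ?mulr0.
Qed.

Lemma sumpsi_at0 (R : fieldType) (q s : R) n (e : nat -> R) : q != 0 -> s != 0 ->
  \sum_(k < n.+1) e k * psiB q s k (s * q ^+ 0) = e 0%N.
Proof.
move=> hq hs; rewrite big_ord_recl big1 ?addr0.
  by rewrite /psiB !qp0 !mulr1.
move=> i _; rewrite /psiB (qpoch_eq0 (x := (s * q ^+ 0) ^- 2 * s ^+ 2) (i := 0)) ?mulr0 ?mul0r //.
  by rewrite mulr0.
by rewrite !expr0 !mulr1; field; rewrite ?hs.
Qed.


Lemma Lop_comb (R : fieldType) (q s a : R) (F G H : R -> R) x :
  G (x / q) + -1 * H (x / q) = F (x / q) -> G x + -1 * H x = F x ->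
  G (q * x) + -1 * H (q * x) = F (q * x) ->
  Lop q s a F x = Lop q s a G x + (-1) * Lop q s a H x.
Proof. by move=> e1 e2 e3; rewrite /Lop -e1 -e2 -e3; ring. Qed.

Unset Implicit Arguments. Set Strict Implicit.

Theorem mainTheorem7 (R : numClosedFieldType) (q : R) (M n : nat) (a z : R) :
  0 < q -> q < 1 ->
  (2 <= M)%N ->
  (n <= M./2)%N ->
  (forall j : nat, q * a != q ^- j) ->
  (forall j : nat, - (q * a) != q ^- j) ->
  (forall j : nat, q ^+ 2 * a ^+ 2 != q ^- j) ->
  z != 0 ->
  phi43 n.*2 (q ^- n.*2) (a ^+ 2 * q ^+ n.*2.+1)
        (z^-1 * sqrtC q ^- M) (- (z * sqrtC q ^- M))
        (q * a) (- (q * a)) (q ^- M) q q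
  =
  phi43 n (q ^+ 2 ^- n) (a ^+ 2 * q ^+ n.*2.+1)
        (z ^- 2 * q ^- M) (z ^+ 2 * q ^- M)
        (q ^+ 2 * a ^+ 2) (q ^- M) (q ^- M.-1) (q ^+ 2) (q ^+ 2).
Proof.
move=> q0 q1 hM hn h1 h2 h3 hz.
have hq : q != 0 by rewrite gt_eqF.
have hD : (n.*2 <= M)%N by rewrite -geq_half_double.
set s := sqrtC q ^- M.
have s0 : 0 < s by rewrite /s invr_gt0 exprn_gt0 // sqrtC_gt0.
have hs : s != 0 by rewrite gt_eqF.
have hsM : q ^- M = s ^+ 2 by rewrite /s exprVn -exprM mulnC exprM sqrtCK.
have hM1 : q ^- M.-1 = s ^+ 2 * q.
  rewrite -hsM; case: M hM {hn hD s s0 hs hsM} => [|M'] //= _.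
  have hM' : q ^+ M' != 0 by rewrite expf_neq0.
  by rewrite exprS; field; rewrite ?hM' ?hq.
rewrite hM1 hsM.
set D := n.*2.
pose f x := \sum_(j < D.+1) Acoef q s a D j * phiB q s j x.
pose g x := \sum_(k < n.+1) Bcoef q s a n k * psiB q s k x.
have eK : q ^+ D = (q ^+ 2) ^+ n by rewrite /D -mul2n exprM.
have -> : phi43 D (q ^- D) (a ^+ 2 * q ^+ D.+1) (z^-1 * s) (- (z * s))
     (q * a) (- (q * a)) (s ^+ 2) q q = f z.
  rewrite /phi43 /f; apply: eq_bigr => j _; rewrite /Acoef /phiB [q ^+ D.+1]exprS [a ^+ 2 * (q * _)]mulrA; ring.
have -> : phi43 n (q ^+ 2 ^- n) (a ^+ 2 * q ^+ D.+1) (z ^- 2 * s ^+ 2) (z ^+ 2 * s ^+ 2)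
     (q ^+ 2 * a ^+ 2) (s ^+ 2) (s ^+ 2 * q) (q ^+ 2) (q ^+ 2) = g z.
  rewrite /phi43 /g; apply: eq_bigr => j _; rewrite /Bcoef /psiB [q ^+ D.+1]exprS eK [a ^+ 2 * (q * _)]mulrA; ring.
have c1 : forall i, 1 - q * a * q ^+ i != 0 := fun i => nz_from hq (h1 i).
have c2 : forall i, 1 - - (q * a) * q ^+ i != 0 := fun i => nz_from hq (h2 i).
have c3 : forall i, (i < M)%N -> 1 - s ^+ 2 * q ^+ i != 0.
  by move=> i hi; rewrite -hsM nz_sM.
have c4 : forall i, 1 - q * q ^+ i != 0 by move=> i; rewrite -exprS nz_pow.
have mu0 : mu q s a 0 = 0 by rewrite /mu expr0 subrr mulr0 !mul0r.
have muG0 : muG q s a 0 = 0 by rewrite /muG expr0 subrr mulr0 !mul0r.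
have hmu : forall j, (0 < j <= D)%N -> mu q s a j != 0.
  case=> // j /andP [_ hj].
  have hj' : q ^+ j.+1 != 0 by rewrite expf_neq0.
  have f1 : 1 - q ^+ j.+1 != 0 by rewrite nz_pow.
  have f2 : 1 - a * q ^+ j.+1 != 0.
    have -> : 1 - a * q ^+ j.+1 = 1 - q * a * q ^+ j by rewrite exprS; ring.
    exact: c1.
  have f3 : 1 + a * q ^+ j.+1 != 0.
    have -> : 1 + a * q ^+ j.+1 = 1 - - (q * a) * q ^+ j by rewrite exprS; ring.
    exact: c2.
  have f4 : 1 - s ^+ 2 * q ^+ j.+1 / q != 0.
    have -> : 1 - s ^+ 2 * q ^+ j.+1 / q = 1 - s ^+ 2 * q ^+ j by rewrite [q ^+ j.+1]exprS; field.
    by apply: c3; rewrite (leq_trans _ hD).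
  by rewrite /mu !mulf_neq0 // oppr_eq0 invr_eq0.
have rA : forall j, (j < D)%N ->
    Acoef q s a D j.+1 * mu q s a j.+1 = (lam q a D - lam q a j) * Acoef q s a D j.
  move=> j hj; apply: ratioA => // i hi.
  by apply: c3; apply: leq_ltn_trans hi (leq_trans hj hD).
have rB : forall k, (k < n)%N ->
    Bcoef q s a n k.+1 * muG q s a k.+1 = (lamG q a n - lamG q a k) * Bcoef q s a n k.
  move=> k hk; apply: ratioB => // i hi.
  - by rewrite -exprM mul2n; exact: nz_from hq (h3 _).
  - rewrite -exprM mul2n; apply: c3; apply: leq_trans hD.
    by rewrite ltn_double (leq_ltn_trans hi hk).
  - rewrite -exprM mul2n -mulrA -exprS; apply: c3; apply: leq_trans hD.
    by rewrite ltn_Sdouble (leq_ltn_trans hi hk).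
  - by rewrite -exprM -exprD nz_pow.
have lamGD : lamG q a n = lam q a D by rewrite /lamG /lam eK.
have Lf : forall x, x != 0 -> x ^+ 2 + 1 != 0 -> x ^+ 2 + q != 0 -> 1 + q * x ^+ 2 != 0 ->
    Lop q s a f x = lam q a D * f x.
  move=> x e0 e1 e2 e3.
  apply: (@eigen_sum _ q s a D (Acoef q s a D) (lam q a) (mu q s a) (phiB q s) x) => //.
  by move=> j _; apply: Lphi.
have Lg : forall x, x != 0 -> x ^+ 2 + 1 != 0 -> x ^+ 2 + q != 0 -> 1 + q * x ^+ 2 != 0 ->
    Lop q s a g x = lam q a D * g x.
  move=> x e0 e1 e2 e3; rewrite -lamGD.
  apply: (@eigen_sum _ q s a n (Bcoef q s a n) (lamG q a) (muG q s a) (psiB q s) x) => //.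
  by move=> j _; apply: Lpsi.
have [c hc] : inSpan q s D (fun x => f x + (-1) * g x).
  apply: span_add; first by exists (Acoef q s a D).
  apply: span_scale; apply: span_sum => k hk.
  apply: (@span_widen _ q s (k + k) D _ _ (@psi_span _ q s k hq)).
  by rewrite addnn leq_double.
have c0 : c 0%N = 0.
  have hs0 : s * q ^+ 0 != 0 by rewrite expr0 mulr1.
  have := hc (s * q ^+ 0) hs0.
  rewrite /f /g sum_at0 // sumpsi_at0 // sum_at0 // => <-.
  by rewrite /Acoef /Bcoef !qp0 !expr0; field.
clearbody f g.
have key : forall m, (m < D)%N -> \sum_(j < D) (c j * (lam q a j - lam q a D)
      + c j.+1 * mu q s a j.+1) * phiB q s j (s * q ^+ m) = 0.
  move=> m _; set x := s * q ^+ m.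
  have x0 : 0 < x by rewrite mulr_gt0 ?exprn_gt0.
  have xq0 : 0 < x / q by rewrite divr_gt0.
  have qx0 : 0 < q * x by rewrite mulr_gt0.
  have [e0 e1 e2 e3] := lat_conds q0 x0.
  rewrite -(@shift_id _ D c (lam q a) (mu q s a) (fun j => phiB q s j x)) //.
  have H1 : \sum_(j < D.+1) c j * (lam q a j * phiB q s j x + mu q s a j * phiB q s j.-1 x)
      = Lop q s a (fun y => \sum_(j < D.+1) c j * phiB q s j y) x.
    by rewrite Lop_sum; apply: eq_bigr => j _; rewrite Lphi.
  rewrite H1 -(hc x) //.
  have -> : Lop q s a (fun y => \sum_(j < D.+1) c j * phiB q s j y) x
      = Lop q s a f x + (-1) * Lop q s a g x.
    by apply: Lop_comb; apply: hc; rewrite gt_eqF.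
  by rewrite Lf // Lg //; ring.
have eall := @indep _ q s D (fun j => c j * (lam q a j - lam q a D) + c j.+1 * mu q s a j.+1) q0 q1 s0 key.
have call : forall j, (j <= D)%N -> c j = 0.
  elim => [|j IH] hj; first exact: c0.
  have hjD : (j <= D)%N := ltnW hj.
  have := eall j hj; rewrite (IH hjD) mul0r add0r => /eqP.
  by rewrite mulf_eq0 (negbTE (hmu j.+1 hj)) orbF => /eqP.
have := hc z hz; rewrite big1 => [E|j _]; last by rewrite call ?mul0r // -ltnS.
have : f z - g z = 0 by rewrite -E; ring.
by move/eqP; rewrite subr_eq0 => /eqP.
Qed.
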